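(* Let $A$ be a complete Boolean algebra, $Z$ an open dense subset of $\mathrm{Ult}(A)$, and $p:Z\to Y$ a perfect irreducible continuous surjection onto a locally compact Hausdorff space $Y$. Define $a\,C_p\,b$ iff $p(\varepsilon_A(a)\cap Z)\cap p(\varepsilon_A(b)\cap Z)\neq\emptyset$ ($a,b\in A$), and $\mathbb B_p=\{a\in A\mid \varepsilon_A(a)\cap Z\text{ is compact}\}$. Then $(A,C_p,\mathbb B_p)$ is a complete local contact algebra, and the map $a\mapsto p(\varepsilon_A(a)\cap Z)$ is a $\mathbf{CLCA}$-isomorphism $(A,C_p,\mathbb B_p)\to(\mathrm{RC}(Y),C_Y,\mathrm{CR}(Y))$, i.e. a Boolean isomorphism onto $\mathrm{RC}(Y)$ which preserves and reflects contact and maps $\mathbb B_p$ onto $\mathrm{CR}(Y)$. Moreover, $\mathbb B_p=\{a\in A\mid\varepsilon_A(a)\subseteq Z\}$.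
   Context: $\mathrm{Ult}(A)$ is the Stone space of ultrafilters of $A$ with basic clopen sets $\varepsilon_A(a)=\{\mathfrak u\mid a\in\mathfrak u\}$. A contact algebra is a Boolean algebra with a relation $C$ such that $a\,C\,a$ for $a>0$; $a\,C\,b$ implies $a,b>0$; $C$ is symmetric; $a\,C\,(b\vee c)$ iff $a\,C\,b$ or $a\,C\,c$; $a\ll b$ iff not $a\,C\,b^*$. A (complete) local contact algebra $(A,C,\mathbb B)$ is a (complete) contact algebra with an ideal $\mathbb B$ satisfying (BC1) $a\ll c$, $a\in\mathbb B$ imply $a\ll b\ll c$ for some $b\in\mathbb B$; (BC2) $a\,C\,b$ implies $a\,C\,(c\wedge b)$ for some $c\in\mathbb B$; (BC3) each $a\ne0$ has $0\ne b\in\mathbb B$ with $b\ll a$. For a locally compact Hausdorff $Y$, $\mathrm{RC}(Y)$ is the complete Boolean algebra of regular closed sets, $F\,C_Y\,G$ iff $F\cap G\ne\emptyset$, and $\mathrm{CR}(Y)$ is the ideal of compact regular closed sets; $(\mathrm{RC}(Y),C_Y,\mathrm{CR}(Y))$ is a complete local contact algebra. Since $Z$ is extremally disconnected, $\varepsilon_A(a)\cap Z$ is clopen and $H\mapsto p(H)$ is a Boolean isomorphism from the clopen (= regular closed) sets of $Z$ onto $\mathrm{RC}(Y)$ (Alexandroff's theorem). *)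

(* Defs.v *)
From HB Require Import structures.
From mathcomp Require Import all_boot all_order.
From mathcomp Require Import boolp classical_sets topology.
Set Implicit Arguments. Unset Strict Implicit. Unset Printing Implicit Defensive.
Import Order.TTheory.
Local Open Scope classical_set_scope.

(* Boolean algebras are ctbDistrLatticeType's (complemented distributive
   lattices with top and bottom). *)
Section BA.
Context {d : Order.disp_t} (A : ctbDistrLatticeType d).

Definition ba_le (a b : A) : Prop := (Order.le a b : bool).

Definition complete_BA : Prop :=
  forall S : set A, exists s : A,
    (forall x, S x -> ba_le x s) /\
    (forall t, (forall x, S x -> ba_le x t) -> ba_le s t).

Definition proper_filter (u : set A) : Prop :=
  [/\ u Order.top, ~ u Order.bottom,
      (forall a b, u a -> ba_le a b -> u b) &
      (forall a b, u a -> u b -> u (Order.meet a b))].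

Definition ultrafilter (u : set A) : Prop :=
  proper_filter u /\ (forall v, proper_filter v -> u `<=` v -> v = u).

Definition contact (C : A -> A -> Prop) : Prop :=
  [/\ (forall a, a != Order.bottom -> C a a),
      (forall a b, C a b -> a != Order.bottom /\ b != Order.bottom),
      (forall a b, C a b -> C b a) &
      (forall a b c, C a (Order.join b c) <-> C a b \/ C a c)].

Definition ll (C : A -> A -> Prop) (a b : A) : Prop := ~ C a (Order.compl b).

Definition ideal (B : set A) : Prop :=
  [/\ B Order.bottom,
      (forall a b, B b -> ba_le a b -> B a) &
      (forall a b, B a -> B b -> B (Order.join a b))].

Definition local_contact_algebra (C : A -> A -> Prop) (B : set A) : Prop :=
  [/\ contact C, ideal B,
      (forall a c, B a -> ll C a c -> exists2 b, B b & ll C a b /\ ll C b c),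
      (forall a b, C a b -> exists2 c, B c & C a (Order.meet c b)) &
      (forall a, a != Order.bottom ->
         exists2 b, B b & b != Order.bottom /\ ll C b a)].

Definition complete_local_contact_algebra (C : A -> A -> Prop) (B : set A)
  : Prop := complete_BA /\ local_contact_algebra C B.
End BA.

Definition ult {d : Order.disp_t} (A : ctbDistrLatticeType d) :=
  {u : set A | ultrafilter u}.

HB.instance Definition _ d (A : ctbDistrLatticeType d) := gen_eqMixin (ult A).
HB.instance Definition _ d (A : ctbDistrLatticeType d) :=
  gen_choiceMixin (ult A).

Section StoneTop.
Context {d : Order.disp_t} (A : ctbDistrLatticeType d).

Definition epsA (a : A) : set (ult A) := fun u => proj1_sig u a.

Let base (o : option A) : set (ult A) := epsA (odflt Order.top o).

Let base_cover : \bigcup_(i in [set: option A]) base i = setT.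
Proof.
apply/seteqP; split => // u _; exists None => //.
by rewrite /base /epsA /=; case: (proj2_sig u) => [[]].
Qed.

Let base_join : forall i j t, [set: option A] i -> [set: option A] j ->
  base i t -> base j t ->
  exists k, [/\ [set: option A] k, base k t & base k `<=` base i `&` base j].
Proof.
move=> i j t _ _ hi hj.
exists (Some (Order.meet (odflt Order.top i) (odflt Order.top j))); split => //.
  by rewrite /base /epsA /=; case: (proj2_sig t) => [[_ _ _ +] _]; apply.
move=> u; rewrite /base /epsA /= => hu.
case: (proj2_sig u) => [[_ _ up _] _]; split; apply: (up _ _ hu);
  rewrite /ba_le; [exact: leIl | exact: leIr].
Qed.

HB.instance Definition _ := isBaseTopological.Build (ult A) base_cover base_join.
End StoneTop.

Section Top.
Context {X Y : topologicalType}.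

Definition closed_in (Z F : set X) : Prop :=
  exists2 G, closed G & F = Z `&` G.

Definition perfect_on (Z : set X) (p : X -> Y) : Prop :=
  [/\ {within Z, continuous p},
      (forall F, closed_in Z F -> closed (p @` F)) &
      (forall y, compact (Z `&` p @^-1` [set y]))].

Definition irreducible_on (Z : set X) (p : X -> Y) : Prop :=
  forall F, closed_in Z F -> p @` F = setT -> F = Z.
End Top.

Section RC.
Context {Y : topologicalType}.
Definition regular_closed (F : set Y) : Prop := closure (interior F) = F.

Definition rc_meet (F G : set Y) : set Y := closure (interior (F `&` G)).
Definition rc_compl (F : set Y) : set Y := closure (~` F).
End RC.

Definition CLCA_iso_RC {d : Order.disp_t} {A : ctbDistrLatticeType d}
  {Y : topologicalType} (C : A -> A -> Prop) (B : set A) (phi : A -> set Y)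
  : Prop :=
  [/\
      [/\ (forall a, regular_closed (phi a)),
          injective phi &
          (forall F, regular_closed F -> exists a, phi a = F)],
      [/\ phi Order.bottom = set0, phi Order.top = setT,
          (forall a b, phi (Order.join a b) = phi a `|` phi b),
          (forall a b, phi (Order.meet a b) = rc_meet (phi a) (phi b)) &
          (forall a, phi (Order.compl a) = rc_compl (phi a))],
      (forall a b, C a b <-> phi a `&` phi b !=set0) &
      phi @` B = [set F | regular_closed F /\ compact F]].

(* Main.v *)
Require Import Defs.
From HB Require Import structures.
From mathcomp Require Import all_boot all_order.
From mathcomp Require Import boolp classical_sets topology.
Set Implicit Arguments. Unset Strict Implicit. Unset Printing Implicit Defensive.
Import Order.Theory.
Local Open Scope classical_set_scope.

Section S.
Context {d : Order.disp_t} (A : ctbDistrLatticeType d).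
Local Notation mt := (@Order.meet _ A).
Local Notation jn := (@Order.join _ A).
Local Notation cp := (@Order.compl _ A).
Local Notation bot := (@Order.bottom _ A).
Local Notation top := (@Order.top _ A).
Local Notation le := (@Order.le _ A).
Implicit Types a b c : A.

Lemma open_eps (a : A) : open (epsA a).
Proof.
by exists [set Some a] => //; rewrite bigcup_set1.
Qed.

Lemma nbhs_eps (u : ult A) (X : set (ult A)) :
  nbhs u X -> exists a, proj1_sig u a /\ epsA a `<=` X.
Proof.
rewrite nbhsE => -[B [oB Bu] BX].
case: oB => D' _ eB; move: Bu; rewrite -eB => -[i Di hi].
exists (odflt top i); split => // v hv; apply: BX; rewrite -eB; exists i => //.
Qed.

Lemma le_complI (x y : A) : le (mt x y) bot -> le x (cp y).
Proof.
move=> h; rewrite -[x]meetx1 -(joinxC y) meetUr leUx leIr andbT.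
exact: le_trans h (le0x _).
Qed.

Section UF.
Variable u : ult A.
Local Notation U := (proj1_sig u).
Let huf : ultrafilter U := proj2_sig u.

Lemma uf_top : U top. Proof. by case: huf => -[]. Qed.
Lemma uf_bot : ~ U bot. Proof. by case: huf => -[]. Qed.
Lemma uf_up a b : U a -> le a b -> U b.
Proof. by case: huf => -[_ _ h _] _; exact: h. Qed.
Lemma uf_meet a b : U a -> U b -> U (mt a b).
Proof. by case: huf => -[_ _ _ h] _; exact: h. Qed.
Lemma uf_meetE a b : U (mt a b) <-> U a /\ U b.
Proof.
split; last by case; exact: uf_meet.
by move=> h; split; apply: uf_up h _; [exact: leIl | exact: leIr].
Qed.

Lemma uf_compl a : U a \/ U (cp a).
Proof.
have [Ua|nUa] := pselect (U a); first by left.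
have [Uc|nUc] := pselect (U (cp a)); first by right.
exfalso; apply: nUa.
pose v := fun x => exists2 w, U w & le (mt w a) x.
have pv : proper_filter v.
  split.
  - by exists top; [exact: uf_top | exact: lex1].
  - move=> [w Uw hw]; apply: nUc; apply: uf_up Uw _; exact: le_complI.
  - by move=> x y [w Uw hw] hxy; exists w => //; exact: le_trans hxy.
  - move=> x y [w1 U1 h1] [w2 U2 h2]; exists (mt w1 w2); first exact: uf_meet.
    rewrite lexI; apply/andP; split.
      by apply: le_trans h1; apply: leI2 => //; exact: leIl.
    by apply: le_trans h2; apply: leI2 => //; exact: leIr.
have sub : U `<=` v by move=> x Ux; exists x => //; exact: leIl.
case: huf => _ /(_ v pv sub) <-.
by exists top; [exact: uf_top | rewrite meet1x].
Qed.

Lemma uf_complE a : U (cp a) <-> ~ U a.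
Proof.
split.
  by move=> Uc Ua; apply: uf_bot; rewrite -(meetxC a); exact: uf_meet.
by case: (uf_compl a).
Qed.

Lemma uf_joinE a b : U (jn a b) <-> U a \/ U b.
Proof.
split; last by case=> h; apply: uf_up h _; [exact: leUl | exact: leUr].
move=> h; case: (uf_compl a) => [|na]; first by left.
case: (uf_compl b) => [|nb]; first by right.
by exfalso; apply: (proj1 (uf_complE (jn a b)) _ h); rewrite complU; exact: uf_meet.
Qed.
End UF.

Lemma uf_extend (v : set A) : proper_filter v -> exists u : ult A, v `<=` proj1_sig u.
Proof.
move=> pv.
pose P := fun X : set A => X = set0 \/ (proper_filter X /\ v `<=` X).
have [M [PM Mmax]] : exists M, P M /\ forall B, M `<` B -> ~ P B.
  apply: Zorn_bigcup => F FP Ftot.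
  have [[X FX [x0 Xx0]]|none] :=
    pselect (exists2 X, F X & X !=set0); last first.
    left; apply/seteqP; split => // x [X FX Xx]; apply: none; exists X => //.
    by exists x.
  have PX : proper_filter X /\ v `<=` X by case: (FP X FX) => // eX; move: Xx0; rewrite eX.
  right; split; last by move=> x vx; exists X => //; case: PX => _; apply.
  split.
  - by exists X => //; case: PX => -[].
  - move=> [Y FY Yb]; case: (FP Y FY) => [eY|[[_ + _ _] _]]; last exact.
    by move: Yb; rewrite eY.
  - move=> x y [Y FY Yx] xy; exists Y => //.
    case: (FP Y FY) => [eY|[[_ _ h _] _]]; last exact: h Yx xy.
    by move: Yx; rewrite eY.
  - move=> x y [Y1 F1 Y1x] [Y2 F2 Y2y].
    have key : forall Y : set A, F Y -> Y x -> Y y -> (\bigcup_(X in F) X) (mt x y).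
      move=> Y FY Yx Yy; exists Y => //.
      case: (FP Y FY) => [eY|[[_ _ _ h] _]]; last exact: h Yx Yy.
      by move: Yx; rewrite eY.
    case: (Ftot _ _ F1 F2) => [s12|s21].
      by apply: (key Y2) => //; exact: s12.
    by apply: (key Y1) => //; exact: s21.
have M0 : M <> set0.
  move=> eM; apply: (Mmax v); last by right; split.
  rewrite eM; split => // /(_ top); apply; by case: pv.
have [pM vM] : proper_filter M /\ v `<=` M by case: PM => // /M0.

have uM : ultrafilter M.
  split => // w pw Mw; apply: contrapT => nw.
  apply: (Mmax w); last by right; split => //; exact: subset_trans Mw.
  split => // wM; apply: nw; exact/seteqP.
by exists (exist _ M uM).
Qed.

Lemma uf_exists (a : A) : a != bot -> exists u : ult A, proj1_sig u a.
Proof.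
move=> a0.
have pa : proper_filter [set x | le a x].
  split => /=.
  - exact: lex1.
  - by move=> h; apply/negP: a0; rewrite negbK eq_le h le0x.
  - by move=> x y h1 h2; exact: le_trans h2.
  - by move=> x y h1 h2; rewrite lexI h1 h2.
by have [u hu] := uf_extend pa; exists u; apply: hu => /=.
Qed.

Lemma eps_meet a b : epsA (mt a b) = epsA a `&` epsA b.
Proof. by apply/seteqP; split => u /=; rewrite /epsA uf_meetE. Qed.
Lemma eps_join a b : epsA (jn a b) = epsA a `|` epsA b.
Proof. by apply/seteqP; split => u /=; rewrite /epsA uf_joinE. Qed.
Lemma eps_compl a : epsA (cp a) = ~` epsA a.
Proof. by apply/seteqP; split => u /=; rewrite /epsA uf_complE. Qed.
Lemma eps_bot : epsA bot = set0.
Proof. by apply/seteqP; split => u //; apply: uf_bot. Qed.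
Lemma eps_top : epsA top = setT.
Proof. by apply/seteqP; split => u // _; apply: uf_top. Qed.
Lemma eps_le a b : epsA a `<=` epsA b -> le a b.
Proof.
move=> h; apply: contrapT => nab.
have : mt a (cp b) != bot.
  apply/negP => /eqP e; apply: nab; rewrite -[b]complK; apply: le_complI.
  by rewrite e.
move=> /uf_exists [u]; rewrite -/(epsA _ u) eps_meet eps_compl => -[/h].
by [].
Qed.
Lemma eps_mono a b : le a b -> epsA a `<=` epsA b.
Proof. by move=> h u hu; exact: uf_up hu h. Qed.
Lemma eps_inj : injective (@epsA d A).
Proof.
by move=> a b e; apply/eqP; rewrite eq_le !eps_le // e.
Qed.
Lemma eps_ne a : a != bot -> epsA a !=set0.
Proof. by move=> /uf_exists [u hu]; exists u. Qed.
Lemma eps_nbhs a (u : ult A) : epsA a u -> nbhs u (epsA a).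
Proof. by move=> h; apply: open_nbhs_nbhs; split => //; exact: open_eps. Qed.
Lemma closed_eps a : closed (epsA a).
Proof. by rewrite -[a]complK eps_compl; apply: open_closedC; exact: open_eps. Qed.

Lemma hausdorff_ult : hausdorff_space (ult A).
Proof.
move=> u w cl; apply: contrapT => nuw.
have [c [uc wc]] : exists c, proj1_sig u c /\ ~ proj1_sig w c.
  apply: contrapT => nex; apply: nuw; clear cl.
  case: u w nex => [U hU] [W hW] /= nex; apply: eq_exist.
  apply/seteqP; split => x hx; apply: contrapT => nx.
    by apply: nex; exists x.
  apply: nex; exists (cp x); split; first exact/(uf_complE (exist _ U hU)).
  by move/(uf_complE (exist _ W hW)).
have h2 : epsA (cp c) w by rewrite eps_compl.
have [x [hx1 hx2]] := cl _ _ (eps_nbhs uc) (eps_nbhs h2).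
by move: hx2; rewrite eps_compl; apply.
Qed.

Lemma compact_ult : compact [set: ult A].
Proof.
move=> F PF _.
pose v := [set b : A | F (epsA b)].
have pv : proper_filter v.
  split; rewrite /v /=.
  - by rewrite eps_top; exact: filterT.
  - by rewrite eps_bot; exact: filter_not_empty.
  - by move=> a b Fa ab; apply: filterS Fa; exact: eps_mono.
  - by move=> a b Fa Fb; rewrite eps_meet; exact: filterI.
have [w vw] := uf_extend pv.
exists w; split => // X N FX /nbhs_eps [c [wc cN]].
apply: contrapT => /set0P/negP; rewrite negbK => /eqP XN.
have : v (cp c).
  rewrite /v /= eps_compl; apply: filterS FX => x Xx cx.
  have : (X `&` N) x by split => //; exact: cN.
  by rewrite XN.
move=> /vw; move: (uf_complE w c) => /= -> ; exact.
Qed.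

Lemma compact_eps a : compact (epsA a).
Proof.
exact: (@subclosed_compact _ (epsA a) setT (@closed_eps a) compact_ult).
Qed.

Lemma eps0 a : epsA a = set0 -> a = bot.
Proof.
move=> e; apply: contrapT => /eqP /eps_ne [u]; by rewrite e.
Qed.

Lemma sep_clopen (K V : set (ult A)) : compact K -> open V -> K `<=` V ->
  exists b, K `<=` epsA b /\ epsA b `<=` V.
Proof.
move=> cK oV KV; apply: contrapT => nex.
pose D := [set b | epsA b `<=` V].
pose B := fun b => K `&` epsA (cp b).
have FF : Filter (filter_from D B).
  apply: filter_from_filter; first by exists bot; rewrite /D /= eps_bot.
  move=> b1 b2 D1 D2; exists (jn b1 b2).
    by rewrite /D /= eps_join => x [/D1|/D2].
  by rewrite /B complU eps_meet => x [Kx [h1 h2]].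
have PF : ProperFilter (filter_from D B).
  apply: filter_from_proper => b Db.
  have : ~ K `<=` epsA b by move=> Kb; apply: nex; exists b.
  move=> /existsNP [x /not_implyP [Kx nb]]; exists x; split => //.
  by rewrite eps_compl.
have FK : filter_from D B K.
  by exists bot; [rewrite /D /= eps_bot | move=> x []].
have [x [Kx clx]] := cK _ PF FK.
have [c [xc cV]] := nbhs_eps (open_nbhs_nbhs (conj oV (KV x Kx))).
have [y [[_ hy1] hy2]] := clx _ _ (ex_intro2 _ _ c cV (fun y h => h)) (eps_nbhs xc).
by move: hy1; rewrite eps_compl.
Qed.

Lemma closure_open_eps (S : set (ult A)) : complete_BA A -> open S ->
  exists s, S `<=` epsA s /\ closure S = epsA s.
Proof.
move=> cA oS.
have [s [ub lub]] := cA [set c | epsA c `<=` S].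
have Ss : S `<=` epsA s.
  move=> x Sx; have [c [xc cS]] := nbhs_eps (open_nbhs_nbhs (conj oS Sx)).
  exact: eps_mono (ub c cS) _ xc.
exists s; split => //; apply/seteqP; split.
  by move=> x Sx; apply: (@closed_eps s); exact: closureS Ss _ Sx.
move=> u us N /nbhs_eps [c [uc cN]].
apply: contrapT => /set0P/negP; rewrite negbK => /eqP SN.
have : le s (cp c).
  apply: lub => c' c'S; apply: le_complI.
  suff -> : mt c' c = bot by [].
  apply: eps0; apply/seteqP; split => // x; rewrite eps_meet => -[/c'S Sx cx].
  have : (S `&` N) x by split => //; exact: cN.
  by rewrite SN.
move=> /(uf_up us); move: (uf_complE u c) => /= ->; exact.
Qed.

End S.

Section Main.
Context {d : Order.disp_t} {A : ctbDistrLatticeType d} {Y : topologicalType}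
  (Z : set (ult A)) (p : ult A -> Y).
Context (cA : complete_BA A) (oZ : open Z) (dZ : closure Z = setT)
  (pf : perfect_on Z p) (irr : irreducible_on Z p) (sur : p @` Z = setT).
Local Notation mt := (@Order.meet _ A).
Local Notation jn := (@Order.join _ A).
Local Notation cp := (@Order.compl _ A).
Local Notation bot := (@Order.bottom _ A).
Local Notation top := (@Order.top _ A).
Local Notation le := (@Order.le _ A).
Implicit Types a b c : A.

Let phi a := p @` (epsA a `&` Z).
Let sat (V : set (ult A)) : set Y := ~` (p @` (Z `\` V)).

Lemma pcont : {in Z, continuous p}.
Proof. by rewrite -continuous_open_subspace //; case: pf. Qed.

Lemma open_pre (O : set Y) : open O -> open (Z `&` p @^-1` O).
Proof. by move: O; apply/continuous_inP => //; exact: pcont. Qed.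

Lemma sat_open V : open V -> open (sat V).
Proof.
move=> oV; apply: closed_openC; case: pf => _ pc _; apply: pc.
by exists (~` V) => //; exact: open_closedC.
Qed.

Lemma sat_fib V y : sat V y -> forall z, Z z -> p z = y -> V z.
Proof.
move=> h z Zz pz; apply: contrapT => nV; apply: h; by exists z.
Qed.

Lemma surj y : exists z, Z z /\ p z = y.
Proof. have : (p @` Z) y by rewrite sur. by case=> z Zz pz; exists z. Qed.

Lemma dense_meet V : open V -> V !=set0 -> Z `&` V !=set0.
Proof.
move=> oV [u Vu]; have : closure Z u by rewrite dZ.
by apply; apply: open_nbhs_nbhs.
Qed.

Lemma irr_ex V : open V -> Z `&` V !=set0 -> exists y, sat V y /\ exists z, Z z /\ p z = y.
Proof.
move=> oV [z0 [Zz0 Vz0]].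
have : p @` (Z `\` V) <> setT.
  move=> e; have : Z `\` V = Z.
    apply: irr e; exists (~` V) => //; exact: open_closedC.
  move=> e'; have : (Z `\` V) z0 by rewrite e'.
  by case.
move=> ne; have [y ny] : exists y, ~ (p @` (Z `\` V)) y.
  apply: contrapT => nex; apply: ne; apply/seteqP; split => // y _.
  by apply: contrapT => h; apply: nex; exists y.
by exists y; split => //; exact: surj.
Qed.

Lemma sat_mono V W : V `<=` W -> sat V `<=` sat W.
Proof. by move=> VW y h [z [Zz nW] pz]; apply: h; exists z => //; split => // /VW. Qed.

Lemma irr_near z V B : Z z -> open V -> V z -> nbhs (p z) B ->
  exists y, [/\ B y, sat V y & exists z', Z z' /\ p z' = y].
Proof.
move=> Zz oV Vz; rewrite nbhsE => -[B' [oB' B'z] B'B].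
have oV' : open (V `&` (Z `&` p @^-1` B')) by apply: openI => //; exact: open_pre.
have [|y [sy [z' [Zz' pz']]]] := irr_ex oV'; first by exists z.
exists y; split.
- by apply: B'B; rewrite -pz'; have [_ [_]] := sat_fib sy Zz' pz'.
- by apply: sat_mono sy => x [].
- by exists z'.
Qed.

Lemma phi_closed a : closed (phi a).
Proof.
case: pf => _ pc _; apply: pc; exists (epsA a); first exact: closed_eps.
by rewrite setIC.
Qed.

Lemma sat_phi a : sat (epsA a) `<=` phi a.
Proof.
move=> y sy; have [z [Zz pz]] := surj y; exists z => //; split => //.
exact: (@sat_fib (epsA a) y sy z Zz pz).
Qed.

Lemma sat_int a y : sat (epsA a) y -> interior (phi a) y.
Proof.
move=> sy; rewrite /interior /=; apply: (@filterS _ _ _ (sat (epsA a))).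
  exact: sat_phi.
by apply: open_nbhs_nbhs; split => //; apply: sat_open; exact: open_eps.
Qed.

Lemma phi_rc a : regular_closed (phi a).
Proof.
apply/seteqP; split.
  move=> y hy; apply: phi_closed; apply: closureS hy; exact: interior_subset.
move=> _ [z [za Zz] <-] B hB.
have [y [By sy _]] := irr_near Zz (open_eps a) za hB.
by exists y; split => //; exact: sat_int.
Qed.

Lemma phi_mono a b : le a b -> phi a `<=` phi b.
Proof. by move=> ab _ [z [za Zz] <-]; exists z => //; split => //; exact: eps_mono ab _ za. Qed.

Lemma phi_le a b : phi a `<=` phi b -> le a b.
Proof.
move=> h; apply: contrapT => nab.
have ne : mt a (cp b) != bot.
  apply/negP => /eqP e; apply: nab; rewrite -[b]complK; apply: le_complI.
  by rewrite e.
have oV := open_eps (mt a (cp b)).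
have [y [sy [z [Zz pz]]]] := irr_ex oV (dense_meet oV (eps_ne ne)).
have := sat_fib sy Zz pz; rewrite eps_meet => -[za _].
have : phi b y by apply: h; exists z.
case=> z' [z'b Zz'] pz'; have := sat_fib sy Zz' pz'.
by rewrite eps_meet eps_compl => -[_].
Qed.

Lemma phi_inj : injective phi.
Proof.
by move=> a b e; apply/eqP; rewrite eq_le !phi_le // e.
Qed.

Lemma phi_bot : phi bot = set0.
Proof. by rewrite /phi eps_bot set0I image_set0. Qed.

Lemma phi_top : phi top = setT.
Proof. by rewrite /phi eps_top setTI. Qed.

Lemma phi_join a b : phi (jn a b) = phi a `|` phi b.
Proof. by rewrite /phi eps_join setIUl image_setU. Qed.

Lemma phi_compl a : phi (cp a) = closure (~` phi a).
Proof.
apply/seteqP; split.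
  move=> _ [z [za Zz] <-] B hB.
  have [y [By sy [z' [Zz' pz']]]] := irr_near Zz (open_eps _) za hB.
  exists y; split => //; case=> z'' [z''a Zz''] pz''.
  by have := sat_fib sy Zz'' pz''; rewrite eps_compl.
move=> y hy; apply: phi_closed; apply: closureS hy => y' ny'.
have [z [Zz pz]] := surj y'; exists z => //; split => //.
rewrite eps_compl => za; apply: ny'; by exists z.
Qed.

Lemma phi_surj F : regular_closed F -> exists a, phi a = F.
Proof.
move=> rF.
have oS : open (Z `&` p @^-1` (interior F)) by apply: open_pre; exact: open_interior.
have [s [Ss cS]] := closure_open_eps cA oS.
exists s; apply/seteqP; split.
  move=> _ [z [zs Zz] <-]; rewrite -rF => B hB.
  have hz : closure (Z `&` p @^-1` (interior F)) z by rewrite cS.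
  have := pcont; rewrite in_setP => /(_ z Zz) /(_ B hB) hB'.
  have [w [[Zw iw] Bw]] := hz _ hB'.
  by exists (p w).
rewrite -rF => y hy; apply: phi_closed; apply: closureS hy => y' iy'.
have [z [Zz pz]] := surj y'; exists z => //; split => //.
by apply: Ss; split => //; rewrite /preimage /= pz.
Qed.

Lemma rc_cl_int (X : set Y) : regular_closed (closure (interior X)).
Proof. exact: (closure_interior_idem X). Qed.

Lemma phi_meet a b : phi (mt a b) = rc_meet (phi a) (phi b).
Proof.
have [c ec] := phi_surj (rc_cl_int (phi a `&` phi b)).
rewrite /rc_meet -ec; apply/seteqP; split; last first.
  apply: phi_mono; rewrite lexI; apply/andP; split; apply: phi_le; rewrite ec.
    move=> y hy; apply: phi_closed; apply: closureS hy.
    by move=> y' /interior_subset [].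
  move=> y hy; apply: phi_closed; apply: closureS hy.
  by move=> y' /interior_subset [].
rewrite ec -phi_rc; apply: closureS; apply: interiorS => y hy.
by split; apply: phi_mono hy; [exact: leIl | exact: leIr].
Qed.

Lemma Bp_char a : compact (epsA a `&` Z) <-> epsA a `<=` Z.
Proof.
split; last first.
  by move=> aZ; rewrite setIidl //; exact: compact_eps.
move=> /(compact_closed (@hausdorff_ult _ A)) cl u ua; suff : (epsA a `&` Z) u by case.
apply: cl => B hB.
have hB' : nbhs u (epsA a `&` B) by apply: filterI => //; exact: eps_nbhs.
have : closure Z u by rewrite dZ.
move=> /(_ _ hB') [x [Zx [xa Bx]]]; by exists x.
Qed.

Lemma proper_pre (K : set Y) : compact K -> compact (Z `&` p @^-1` K).
Proof.
move=> cK F PF FK.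
have PG : ProperFilter (p @ F) by exact: fmap_proper_filter.
have GK : (p @ F) K.
  by apply: (@filterS _ _ _ (Z `&` p @^-1` K)) => // x [].
have [y [Ky cly]] := cK _ PG GK.
have cPhi : compact (Z `&` p @^-1` [set y]) by case: pf.
have claim : forall X, F X -> closure X `&` (Z `&` p @^-1` [set y]) !=set0.
  move=> X FX; apply: contrapT => /set0P/negP; rewrite negbK => /eqP e.
  have FX' : F (X `&` (Z `&` p @^-1` K)) by exact: filterI.
  have cC : closed (p @` (Z `&` closure X)).
    case: pf => _ pc _; apply: pc; exists (closure X) => //; exact: closed_closure.
  have ny : ~ (p @` (Z `&` closure X)) y.
    case=> z [Zz clz] pz; have : (closure X `&` (Z `&` p @^-1` [set y])) z by [].
    by rewrite e.
  have nN : nbhs y (~` (p @` (Z `&` closure X))).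
    by apply: open_nbhs_nbhs; split => //; exact: closed_openC.
  have G' : (p @ F) (p @` (X `&` (Z `&` p @^-1` K))).
    by apply: (@filterS _ _ _ (X `&` (Z `&` p @^-1` K))) => // x hx; exists x.
  have [_ [[w [Xw [Zw _]] <-] nw]] := cly _ _ G' nN.
  by apply: nw; exists w => //; split => //; exact: subset_closure.
pose H := filter_from F (fun X => closure X `&` (Z `&` p @^-1` [set y])).
have FH : Filter H.
  apply: filter_from_filter; first by exists setT; exact: filterT.
  move=> X1 X2 F1 F2; exists (X1 `&` X2); first exact: filterI.
  move=> x [clx Px]; have := closureI clx; case=> c1 c2; by split; split.
have PH : ProperFilter H by apply: filter_from_proper => X FX; exact: claim.
have HPhi : H (Z `&` p @^-1` [set y]).
  by exists setT; [exact: filterT | move=> x []].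
have [z [[Zz pz] clz]] := cPhi _ PH HPhi.
exists z; split; first by split => //; rewrite /preimage /= pz.
rewrite clusterE => X FX; apply: (@closed_closure _ X) => B hB.
have hH : H (closure X `&` (Z `&` p @^-1` [set y])) by exists X.
have [x [[clx _] Bx]] := clz _ _ hH hB.
by exists x.
Qed.

Lemma Bp_phi_compact a : compact (epsA a `&` Z) -> compact (phi a).
Proof.
move=> ca; apply: continuous_compact ca.
apply: (@continuous_subspaceW _ _ _ Z); first by move=> x [].
by case: pf.
Qed.

Lemma phi_compact_Bp a : compact (phi a) -> compact (epsA a `&` Z).
Proof.
move=> /proper_pre cP.
have -> : epsA a `&` Z = (Z `&` p @^-1` (phi a)) `&` epsA a.
  apply/seteqP; split => x.
    by case=> xa Zx; split => //; split => //; exists x.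
  by case=> -[Zx _] xa.
by apply: compact_closedI => //; exact: closed_eps.
Qed.

Lemma phi_ne a : a != bot -> phi a !=set0.
Proof.
move=> a0; have [z [Zz za]] := dense_meet (open_eps a) (eps_ne a0).
by exists (p z); exists z.
Qed.

Let Cp a b := phi a `&` phi b !=set0.
Let Bp := [set a | compact (epsA a `&` Z)].

Lemma BC1 a c : Bp a -> ll Cp a c -> exists2 b, Bp b & ll Cp a b /\ ll Cp b c.
Proof.
move=> Ba ac.
have cK := proper_pre (Bp_phi_compact Ba).
have oV : open (Z `&` p @^-1` (~` phi (cp c))).
  by apply: open_pre; apply: closed_openC; exact: phi_closed.
have KV : Z `&` p @^-1` (phi a) `<=` Z `&` p @^-1` (~` phi (cp c)).
  move=> z [Zz pa]; split => // pc; apply: ac; by exists (p z).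
have [b [Kb bV]] := sep_clopen cK oV KV.
exists b; first by apply/Bp_char => z /bV [].
split.
  move=> [y [ya]]; rewrite phi_compl => ycl.
  have sb : sat (epsA b) y.
    by case=> z [Zz nb] pz; apply: nb; apply: Kb; split => //; rewrite /preimage /= pz.
  have nb : nbhs y (sat (epsA b)).
    by apply: open_nbhs_nbhs; split => //; apply: sat_open; exact: open_eps.
  have [y' [ny' sy']] := ycl _ nb.
  by apply: ny'; exact: sat_phi.
move=> [y [[z [zb Zz] <-] yc]].
by have [_] := bV z zb.
Qed.

Lemma BC2 a b : Cp a b -> exists2 c, Bp c & Cp a (mt c b).
Proof.
move=> [y [ya yb]].
have cPhi : compact (Z `&` p @^-1` [set y]) by case: pf.
have [c [Pc cZ]] := sep_clopen cPhi oZ (fun x h => proj1 h).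
exists c; first exact/Bp_char.
exists y; split => //; rewrite phi_meet /rc_meet => B hB.
have sc : sat (epsA c) y.
  by case=> z [Zz nc] pz; apply: nc; apply: Pc; split => //; rewrite /preimage /= pz.
have hW : nbhs y (B `&` sat (epsA c)).
  apply: filterI => //; apply: open_nbhs_nbhs; split => //.
  by apply: sat_open; exact: open_eps.
have := phi_rc b; rewrite /regular_closed => e.
have : closure (interior (phi b)) y by rewrite e.
move=> /(_ _ hW) [y' [iy' [By' sy']]].
exists y'; split => //; rewrite interiorI; split => //.
exact: sat_int.
Qed.

Lemma BC3 a : a != bot -> exists2 b, Bp b & b != bot /\ ll Cp b a.
Proof.
move=> a0.
have oa := open_eps a.
have [y [sy [z0 [Zz0 pz0]]]] := irr_ex oa (dense_meet oa (eps_ne a0)).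
have cPhi : compact (Z `&` p @^-1` [set y]) by case: pf.
have oV : open (Z `&` p @^-1` (sat (epsA a))) by apply: open_pre; exact: sat_open.
have PV : Z `&` p @^-1` [set y] `<=` Z `&` p @^-1` (sat (epsA a)).
  by move=> z [Zz pz]; split => //; rewrite /preimage /= pz.
have [b [Pb bV]] := sep_clopen cPhi oV PV.
exists b; first by apply/Bp_char => z /bV [].
split.
  apply/negP => /eqP b0.
  have : epsA b z0 by apply: Pb; split => //.
  by rewrite b0 eps_bot.
move=> [y1 [[z1 [z1b Zz1] <-] [z2 [z2a Zz2] pz2]]].
have [_ s1] := bV z1 z1b.
have := sat_fib s1 Zz2 pz2.
by rewrite eps_compl in z2a.
Qed.

Lemma contact_Cp : contact Cp.
Proof.
split.
- by move=> a a0; have [y ya] := phi_ne a0; exists y.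
- move=> a b [y [ya yb]]; split; apply/negP => /eqP e.
    by move: ya; rewrite e phi_bot.
  by move: yb; rewrite e phi_bot.
- by move=> a b; rewrite /Cp setIC.
- move=> a b c; rewrite /Cp phi_join setIUr; split.
    by case=> y [|]; [left|right]; exists y.
  by case=> -[y h]; exists y; [left|right].
Qed.

Lemma ideal_Bp : ideal Bp.
Proof.
split.
- by rewrite /Bp /= eps_bot set0I; exact: compact0.
- move=> a b /Bp_char bZ ab; apply/Bp_char.
  by apply: subset_trans bZ; exact: eps_mono.
- move=> a b /Bp_char aZ /Bp_char bZ; apply/Bp_char.
  by rewrite eps_join => x [/aZ|/bZ].
Qed.

Lemma main_thm :
  [/\ complete_local_contact_algebra Cp Bp,
      CLCA_iso_RC Cp Bp phi &
      Bp = [set a : A | epsA a `<=` Z]].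
Proof.
split.
- split => //; split.
  + exact: contact_Cp.
  + exact: ideal_Bp.
  + exact: BC1.
  + exact: BC2.
  + exact: BC3.
- split.
  + split; [exact: phi_rc | exact: phi_inj | exact: phi_surj].
  + split; [exact: phi_bot | exact: phi_top | exact: phi_join | exact: phi_meet | exact: phi_compl].
  + by [].
  + apply/seteqP; split.
      by move=> _ [a Ba <-]; split; [exact: phi_rc | exact: Bp_phi_compact].
    move=> F [rF cF]; have [a ea] := phi_surj rF.
    by exists a => //; apply: phi_compact_Bp; rewrite ea.
- by apply/seteqP; split => a /Bp_char.
Qed.

End Main.

Theorem proposition3p10 (d : Order.disp_t) (A : ctbDistrLatticeType d)
  (Y : topologicalType) (Z : set (ult A)) (p : ult A -> Y) :
  complete_BA A ->
  open Z -> closure Z = setT ->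
  hausdorff_space Y -> locally_compact [set: Y] ->
  perfect_on Z p -> irreducible_on Z p -> p @` Z = setT ->
  let Cp := fun a b : A =>
    p @` (epsA a `&` Z) `&` p @` (epsA b `&` Z) !=set0 in
  let Bp := [set a : A | compact (epsA a `&` Z)] in
  let phi := fun a : A => p @` (epsA a `&` Z) in
  [/\ complete_local_contact_algebra Cp Bp,
      CLCA_iso_RC Cp Bp phi &
      Bp = [set a : A | epsA a `<=` Z]].
Proof.
move=> cA oZ dZ _ _ pf irr sur.
exact: (main_thm cA oZ dZ pf irr sur).
Qed.
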